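(* Given $\beta_0,\beta_1,\ldots\in\omega^\omega$, there exists $\alpha\in\omega^\omega$ such that for every continuous injective group homomorphism $\Phi:S_\infty\to S_\infty$ we have $\Phi(K_\alpha)\not\subseteq\bigcup_n K_{\beta_n}$.
   Context: $S_\infty$ is the group of all permutations of $\omega$ with the topology of pointwise convergence. For $\alpha\in\omega^\omega$, $K_\alpha=\{f\in S_\infty: f\le\alpha \text{ and } f^{-1}\le\alpha\}$, where $f\le\alpha$ means $f(n)\le\alpha(n)$ for all $n\in\omega$. *)

(* Defs.v *)
From Stdlib Require Import Arith.

Record Sinf : Type := MkSinf {
  pfun :> nat -> nat;
  pinv : nat -> nat;
  pfunK : forall n, pinv (pfun n) = n;
  pinvK : forall n, pfun (pinv n) = n
}.

Definition fle (f alpha : nat -> nat) : Prop := forall n, f n <= alpha n.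

Definition inK (alpha : nat -> nat) (f : Sinf) : Prop :=
  fle (pfun f) alpha /\ fle (pinv f) alpha.

Definition is_hom (Phi : Sinf -> Sinf) : Prop :=
  forall f g h : Sinf, (forall n, h n = f (g n)) ->
    forall n, Phi h n = Phi f (Phi g n).

(* Injectivity (elements of S_inf are equal iff they agree pointwise). *)
Definition is_inj (Phi : Sinf -> Sinf) : Prop :=
  forall f g : Sinf, (forall n, Phi f n = Phi g n) -> forall n, f n = g n.

(* Continuity for the topology of pointwise convergence: each coordinate of
   Phi f depends only on finitely many values of f, locally around f. *)
Definition is_cont (Phi : Sinf -> Sinf) : Prop :=
  forall (f : Sinf) (n : nat), exists N : nat,
    forall g : Sinf, (forall k, k < N -> g k = f k) -> Phi g n = Phi f n.

(* Main.v *)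
Require Import Defs.
From Stdlib Require Import Arith Lia List Classical ClassicalEpsilon.
Import ListNotations.

Definition trf (a b n : nat) : nat :=
  if Nat.eqb n a then b else if Nat.eqb n b then a else n.

Ltac brute := unfold trf;
  repeat (match goal with |- context [Nat.eqb ?x ?y] => is_var x; is_var y;
     destruct (Nat.eqb_spec x y); cbn end); try lia.

Lemma trf_inv a b n : trf a b (trf a b n) = n.
Proof. brute. Qed.

Definition idS : Sinf := MkSinf (fun n => n) (fun n => n) (fun _ => eq_refl) (fun _ => eq_refl).
Definition trS a b : Sinf := MkSinf (trf a b) (trf a b) (trf_inv a b) (trf_inv a b).
Definition compS (f g : Sinf) : Sinf.
Proof.
  refine (MkSinf (fun n => f (g n)) (fun n => pinv g (pinv f n)) _ _);
  intro n; now rewrite ?pfunK, ?pinvK.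
Defined.

Lemma Phi_id Phi (H : is_hom Phi) n : Phi idS n = n.
Proof.
  pose proof (H idS idS idS (fun _ => eq_refl) n) as E.
  apply (f_equal (pinv (Phi idS))) in E. rewrite !pfunK in E. auto.
Qed.

Lemma Phi_ext Phi (H : is_hom Phi) (h h' : Sinf) : (forall n, h n = h' n) ->
  forall n, Phi h n = Phi h' n.
Proof.
  intros E n. rewrite (H h' idS h E n). now rewrite Phi_id.
Qed.

Lemma Phi_comp Phi (H : is_hom Phi) f g n : Phi (compS f g) n = Phi f (Phi g n).
Proof. exact (H f g (compS f g) (fun _ => eq_refl) n). Qed.

Lemma Phi_tr2 Phi (H : is_hom Phi) a b x : Phi (trS a b) (Phi (trS a b) x) = x.
Proof.
  rewrite <- Phi_comp by auto.
  rewrite (Phi_ext Phi H _ idS). apply Phi_id; auto.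
  intro n; simpl; apply trf_inv.
Qed.

Lemma Phi_3 Phi (H : is_hom Phi) a b c y :
  Phi (compS (compS a b) c) y = Phi a (Phi b (Phi c y)).
Proof. now rewrite !Phi_comp. Qed.

Definition Qp (Phi : Sinf -> Sinf) y c := forall d d', c < d -> c < d' -> d <> d' ->
  Phi (trS c d) y <> Phi (trS c d') y.
Definition Stab (Phi : Sinf -> Sinf) y N := forall g : Sinf, (forall k, k < N -> g k = k) -> Phi g y = y.

Lemma propag Phi (H : is_hom Phi) y c d : Qp Phi y c -> c < d ->
  Qp Phi (Phi (trS c d) y) d.
Proof.
  intros Q cd e e' de de' ne Heq. apply (Q e e'); try lia.
  rewrite (Phi_ext Phi H (trS c e) (compS (compS (trS c d) (trS d e)) (trS c d)))
    by (intro n; simpl; brute).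
  rewrite (Phi_ext Phi H (trS c e') (compS (compS (trS c d) (trS d e')) (trS c d)))
    by (intro n; simpl; brute).
  rewrite !Phi_3 by auto. now rewrite Heq.
Qed.

Lemma redu Phi (H : is_hom Phi) y c : Stab Phi y (S c) -> ~ Qp Phi y c -> Stab Phi y c.
Proof.
  intros St nQ.
  destruct (classic (exists d d', c < d /\ c < d' /\ d <> d' /\
     Phi (trS c d) y = Phi (trS c d') y)) as [Hex|Hn].
  2:{ exfalso; apply nQ; intros d d' h1 h2 h3 Heq; apply Hn; eauto 10. }
  destruct Hex as (d & d' & h1 & h2 & h3 & Heq).
  assert (trfix : forall a b k, k < S c -> c < a -> c < b -> trf a b k = k)
    by (intros; brute).
  assert (A1 : forall e, c < e -> Phi (trS c e) y = Phi (trS c d) y).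
  { intros e he.
    destruct (Nat.eq_dec e d) as [->|ned]; [reflexivity|].
    destruct (Nat.eq_dec e d') as [->|ned']; [now rewrite Heq|].
    rewrite (Phi_ext Phi H (trS c e) (compS (compS (trS d e) (trS c d)) (trS d e)))
      by (intro n; simpl; brute).
    rewrite Phi_3 by auto.
    rewrite (St (trS d e)) by (intros k hk; simpl; apply trfix; lia).
    rewrite Heq. rewrite <- Phi_comp by auto.
    rewrite (Phi_ext Phi H _ (compS (trS c d') (trS d e))) by (intro n; simpl; brute).
    rewrite Phi_comp by auto.
    rewrite (St (trS d e)) by (intros k hk; simpl; apply trfix; lia). reflexivity. }
  assert (A2 : Phi (trS c d) y = y).
  { assert (E := St (trS (S c) (S (S c)))).
    rewrite (Phi_ext Phi H _ (compS (compS (trS c (S c)) (trS c (S (S c)))) (trS c (S c))))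
      in E.
    2:{ intro n; simpl. generalize (S c) (S (S c)) (Nat.lt_succ_diag_r c) (Nat.lt_lt_succ_r _ _ (Nat.lt_succ_diag_r c)) (Nat.lt_succ_diag_r (S c)).
        intros f g hf hg hfg. brute. }
    rewrite Phi_3 in E by auto.
    rewrite (A1 (S c)) in E by lia.
    rewrite <- (A1 (S (S c))) in E by lia.
    rewrite Phi_tr2 in E by auto.
    rewrite (A1 (S c)) in E by lia.
    apply E. intros k hk; simpl; apply trfix; lia. }
  intros g hg.
  destruct (Nat.eq_dec (g c) c) as [gc|gc].
  { apply St. intros k hk. destruct (Nat.eq_dec k c) as [->|]; auto. apply hg; lia. }
  set (e := g c) in *.
  assert (ce : c < e).
  { destruct (Nat.lt_trichotomy c e) as [|[|lt]]; try lia.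
    exfalso. pose proof (hg e lt). assert (pinv g (g e) = pinv g (g c)) by (rewrite H0; reflexivity).
    rewrite !pfunK in H1. lia. }
  set (g' := compS (trS c e) g).
  assert (hg' : forall k, k < S c -> g' k = k).
  { intros k hk; simpl. destruct (Nat.eq_dec k c) as [->|nk].
    - fold e. unfold trf. rewrite Nat.eqb_refl.
      destruct (Nat.eqb_spec e c); lia.
    - rewrite hg by lia. unfold trf; destruct (Nat.eqb_spec k c); destruct (Nat.eqb_spec k e); lia. }
  rewrite (Phi_ext Phi H g (compS (trS c e) g')) by (intro n; simpl; now rewrite trf_inv).
  rewrite Phi_comp by auto. rewrite (St g' hg'). rewrite A1 by auto. exact A2.
Qed.

Lemma findQ Phi (H : is_hom Phi) y : (exists g, Phi g y <> y) ->
  forall N, Stab Phi y N -> exists c, Qp Phi y c.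
Proof.
  intros [g hg] N. induction N as [|c IH]; intros St.
  - exfalso; apply hg, St; intros; lia.
  - destruct (classic (Qp Phi y c)) as [q|nq]; eauto.
    apply IH. apply redu; auto.
Qed.

Lemma initQ Phi (H : is_hom Phi) (Hi : is_inj Phi) (Hc : is_cont Phi) :
  exists y c, Qp Phi y c.
Proof.
  destruct (classic (exists y, Phi (trS 0 1) y <> y)) as [[y hy]|hn].
  - destruct (Hc idS y) as [N HN]. exists y.
    apply (findQ Phi H y (ex_intro (fun g => Phi g y <> y) _ hy) N).
    intros g hg. rewrite (HN g hg). apply Phi_id; auto.
  - exfalso. assert (E := Hi (trS 0 1) idS).
    assert (E0 : trS 0 1 0 = idS 0).
    { apply E. intro n. rewrite Phi_id by auto.
      destruct (classic (Phi (trS 0 1) n = n)); auto. exfalso; eauto. }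
    simpl in E0. discriminate.
Qed.

Fixpoint sumto (F : nat -> nat) (n : nat) : nat :=
  match n with 0 => 0 | S k => sumto F k + F k end.

Lemma sumto_mono_n F n n' : n <= n' -> sumto F n <= sumto F n'.
Proof. induction 1; simpl; lia. Qed.
Lemma sumto_mono_F F G n : (forall i, F i <= G i) -> sumto F n <= sumto G n.
Proof. intros h; induction n; simpl; auto. specialize (h n); lia. Qed.
Lemma sumto_ge F n i : i < n -> F i <= sumto F n.
Proof. induction n; intros hi; simpl. lia. destruct (Nat.eq_dec i n) as [->|]; [lia|].
  specialize (IHn ltac:(lia)); lia. Qed.

Definition Bb (beta : nat -> nat -> nat) (x : nat) :=
  x + sumto (fun j => sumto (fun i => beta j i) (S x)) (S x).

Lemma Bb_mono beta x y : x <= y -> Bb beta x <= Bb beta y.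
Proof.
  intros h; unfold Bb.
  assert (sumto (fun j => sumto (fun i => beta j i) (S x)) (S x) <=
          sumto (fun j => sumto (fun i => beta j i) (S y)) (S x)).
  { apply sumto_mono_F; intros; apply sumto_mono_n; lia. }
  assert (sumto (fun j => sumto (fun i => beta j i) (S y)) (S x) <=
          sumto (fun j => sumto (fun i => beta j i) (S y)) (S y)) by (apply sumto_mono_n; lia).
  lia.
Qed.

Lemma Bb_ge beta j i x : j <= x -> i <= x -> beta j i <= Bb beta x.
Proof.
  intros hj hi; unfold Bb.
  pose proof (sumto_ge (fun i => beta j i) (S x) i ltac:(lia)).
  pose proof (sumto_ge (fun j => sumto (fun i => beta j i) (S x)) (S x) j ltac:(lia)).
  simpl in *. lia.
Qed.

Lemma Bb_infl beta x : x <= Bb beta x.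
Proof. unfold Bb; lia. Qed.

Fixpoint it (f : nat -> nat) (n x : nat) : nat :=
  match n with 0 => x | S k => f (it f k x) end.

Lemma it_mono_arg f n x y : (forall a b, a <= b -> f a <= f b) -> x <= y -> it f n x <= it f n y.
Proof. intros hf h; induction n; simpl; auto. Qed.
Lemma it_mono_fun f g n x : (forall a, f a <= g a) -> (forall a b, a <= b -> g a <= g b) ->
  it f n x <= it g n x.
Proof. intros h hg; induction n; simpl; auto. specialize (h (it f n x)).
  specialize (hg _ _ IHn). lia. Qed.
Lemma it_mono_n g n k x : (forall a, a <= g a) -> it g n x <= it g (n + k) x.
Proof. intros h; induction k. rewrite Nat.add_0_r; auto.
  rewrite Nat.add_succ_r; simpl. specialize (h (it g (n+k) x)); lia. Qed.

Definition Gg beta c := it (fun v => Bb beta (v + c)) (S c) c.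
Definition alph beta c := c + 2 + Gg beta c.

Lemma pigeon (v : nat -> nat) n b : (forall i, i < n -> v i <= b) ->
  (forall i j, i < n -> j < n -> v i = v j -> i = j) -> n <= S b.
Proof.
  intros hb hi.
  assert (ND : NoDup (map v (seq 0 n))).
  { apply NoDup_map_NoDup_ForallPairs; [|apply seq_NoDup].
    intros i j hi' hj' e. apply in_seq in hi'; apply in_seq in hj'. apply hi; lia. }
  assert (IN : incl (map v (seq 0 n)) (seq 0 (S b))).
  { intros x hx. apply in_map_iff in hx. destruct hx as (i & <- & hi'). apply in_seq in hi'.
    apply in_seq. specialize (hb i ltac:(lia)). lia. }
  pose proof (NoDup_incl_length ND IN). rewrite length_map, !length_seq in H. auto.
Qed.

Fixpoint chain (Phi : Sinf -> Sinf) (a : nat -> nat) (y c k : nat) : nat * nat :=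
  match k with
  | 0 => (y, c)
  | S k => let p := chain Phi a y c k in (Phi (trS (snd p) (a (snd p))) (fst p), a (snd p))
  end.

Lemma stage Phi (H : is_hom Phi) (Hi : is_inj Phi) (Hc : is_cont Phi) beta (P : Sinf) m L :
  exists c d w, L <= c /\ c < d /\ d <= alph beta c /\
    (beta m w < P (Phi (trS c d) w) \/ beta m (P (Phi (trS c d) w)) < w).
Proof.
  apply NNPP; intro NH.
  assert (NH' : forall c d w, L <= c -> c < d -> d <= alph beta c ->
     P (Phi (trS c d) w) <= beta m w /\ w <= beta m (P (Phi (trS c d) w))).
  { intros c d w h1 h2 h3. split; apply Nat.nlt_ge; intro h; apply NH; exists c, d, w; auto. }
  clear NH.
  destruct (initQ Phi H Hi Hc) as (y0 & c0 & Q0).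
  set (c1 := c0 + L + 1). set (y1 := Phi (trS c0 c1) y0).
  assert (Q1 : Qp Phi y1 c1) by (apply propag; auto; unfold c1; lia).
  set (a := alph beta).
  set (Bm := fun x => Bb beta (x + m)).
  assert (Bm_mono : forall x y, x <= y -> Bm x <= Bm y) by (intros; apply Bb_mono; lia).
  assert (bBm : forall x, beta m x <= Bm x) by (intros; apply Bb_ge; lia).
  set (M0 := Nat.max y1 (P y1)).
  set (ch := chain Phi a y1 c1).
  assert (INV : forall k, Qp Phi (fst (ch k)) (snd (ch k)) /\ k + L <= snd (ch k) /\
            Nat.max (fst (ch k)) (P (fst (ch k))) <= it Bm k M0).
  { induction k as [|k IH].
    - simpl. repeat split; auto; unfold c1, M0; simpl; lia.
    - destruct IH as (Qk & Lk & Mk).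
      change (ch (S k)) with (Phi (trS (snd (ch k)) (a (snd (ch k)))) (fst (ch k)), a (snd (ch k))).
      simpl fst; simpl snd.
      set (c := snd (ch k)) in *. set (y := fst (ch k)) in *.
      assert (ac : c < a c) by (unfold a, alph; lia).
      split; [apply propag; auto|]. split; [unfold a, alph; lia|].
      destruct (NH' c (a c) y ltac:(lia) ac (le_n _)) as [f1 _].
      destruct (NH' c (a c) (Phi (trS c (a c)) y) ltac:(lia) ac (le_n _)) as [_ f2].
      rewrite Phi_tr2 in f2 by auto.
      simpl. pose proof (bBm y). pose proof (bBm (P y)).
      pose proof (Bm_mono y (Nat.max y (P y)) ltac:(lia)).
      pose proof (Bm_mono (P y) (Nat.max y (P y)) ltac:(lia)).
      pose proof (Bm_mono _ _ Mk). lia. }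
  set (k := M0 + m).
  destruct (INV k) as (Qk & Lk & Mk).
  set (c := snd (ch k)) in *. set (y := fst (ch k)) in *.
  assert (bnd : Bm (Nat.max y (P y)) <= Gg beta c).
  { eapply Nat.le_trans. apply Bm_mono, Mk.
    change (Bm (it Bm k M0)) with (it Bm (S k) M0).
    unfold Gg.
    eapply Nat.le_trans. apply (it_mono_fun Bm (fun v => Bb beta (v + c))).
    intros; apply Bb_mono; unfold k in *; lia. intros; apply Bb_mono; lia.
    eapply Nat.le_trans. apply it_mono_arg with (y := c). intros; apply Bb_mono; lia.
    unfold k in *; lia.
    replace (S c) with (S k + (c - k)) by (unfold k in *; lia).
    apply it_mono_n. intros; pose proof (Bb_infl beta (a0 + c)); lia. }
  assert (PG := pigeon (fun i => Phi (trS c (c + 1 + i)) y) (2 + Gg beta c) (Gg beta c)).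
  enough (2 + Gg beta c <= S (Gg beta c)) by lia.
  apply PG.
  - intros i hi.
    destruct (NH' c (c + 1 + i) (Phi (trS c (c + 1 + i)) y) ltac:(lia) ltac:(lia)
       ltac:(unfold alph; lia)) as [_ f2].
    rewrite Phi_tr2 in f2 by auto.
    pose proof (bBm (P y)). pose proof (Bm_mono (P y) (Nat.max y (P y)) ltac:(lia)). lia.
  - intros i j hi hj e. destruct (Nat.eq_dec i j); auto. exfalso.
    apply (Qk (c + 1 + i) (c + 1 + j)); auto; lia.
Qed.

Fixpoint prodl (l : list (nat*nat)) : Sinf :=
  match l with [] => idS | p :: l' => compS (prodl l') (trS (fst p) (snd p)) end.

Lemma prodl_fix l x : (forall p, In p l -> fst p <> x /\ snd p <> x) ->
  prodl l x = x /\ pinv (prodl l) x = x.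
Proof.
  induction l as [|p l IH]; intros h; simpl; auto.
  destruct (h p (or_introl eq_refl)) as [h1 h2].
  assert (trf (fst p) (snd p) x = x) by (unfold trf; destruct (Nat.eqb_spec x (fst p)); destruct (Nat.eqb_spec x (snd p)); lia).
  destruct IH as [I1 I2]; [intros; apply h; now right|].
  rewrite H, I1, I2, H; auto.
Qed.

Lemma trf_fix a b x : a <> x -> b <> x -> trf a b x = x.
Proof. intros; unfold trf; destruct (Nat.eqb_spec x a); destruct (Nat.eqb_spec x b); lia. Qed.

Lemma prodl_app l new x : (forall p, In p new -> fst p <> x /\ snd p <> x) ->
  prodl (new ++ l) x = prodl l x.
Proof.
  induction new as [|p new IH]; intros h; simpl; auto.
  destruct (h p (or_introl eq_refl)).
  rewrite trf_fix by auto. apply IH. intros; apply h; now right.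
Qed.

Lemma prodl_app_inv l new v : (forall p, In p new -> fst p <> pinv (prodl l) v /\ snd p <> pinv (prodl l) v) ->
  pinv (prodl (new ++ l)) v = pinv (prodl l) v.
Proof.
  induction new as [|p new IH]; intros h; simpl; auto.
  destruct (h p (or_introl eq_refl)).
  rewrite IH by (intros; apply h; now right). apply trf_fix; auto.
Qed.

Fixpoint st (stepf : list (nat*nat) -> nat -> nat -> nat*nat*nat)
  (contf : list (nat*nat) -> nat -> nat) (m : nat) : list (nat*nat) * nat :=
  match m with
  | 0 => ([], 0)
  | S m' => let s := st stepf contf m' in let t := stepf (fst s) m' (snd s) in
     ((fst (fst t), snd (fst t)) :: fst s,
      S (snd (fst t)) + contf ((fst (fst t), snd (fst t)) :: fst s) (snd t))
  end.

Definition StepOK (alpha : nat -> nat) (stepf : list (nat*nat) -> nat -> nat -> nat*nat*nat) :=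
  forall l m L, L <= fst (fst (stepf l m L)) /\ fst (fst (stepf l m L)) < snd (fst (stepf l m L))
    /\ snd (fst (stepf l m L)) <= alpha (fst (fst (stepf l m L))).

Lemma st_entries alpha stepf contf (Hs : StepOK alpha stepf) m :
  (forall p, In p (fst (st stepf contf m)) -> fst p < snd (st stepf contf m) /\ snd p < snd (st stepf contf m))
  /\ m <= snd (st stepf contf m).
Proof.
  induction m as [|m [IH1 IH2]]; simpl. split; [tauto|lia].
  destruct (Hs (fst (st stepf contf m)) m (snd (st stepf contf m))) as (h1 & h2 & h3).
  split; [|lia].
  intros p [<-|hp]; simpl. lia. destruct (IH1 p hp); lia.
Qed.

Lemma st_suffix alpha stepf contf (Hs : StepOK alpha stepf) j M : j <= M ->
  exists new, fst (st stepf contf M) = new ++ fst (st stepf contf j) /\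
    (forall p, In p new -> snd (st stepf contf j) <= fst p /\ snd (st stepf contf j) <= snd p) /\
    snd (st stepf contf j) <= snd (st stepf contf M).
Proof.
  induction 1 as [|M hM IH].
  - exists []; simpl; split; [auto|split; [tauto|lia]].
  - destruct IH as (new & e & hn & hL).
    destruct (Hs (fst (st stepf contf M)) M (snd (st stepf contf M))) as (h1 & h2 & h3).
    exists ((fst (fst (stepf (fst (st stepf contf M)) M (snd (st stepf contf M)))), snd (fst (stepf (fst (st stepf contf M)) M (snd (st stepf contf M))))) :: new). simpl. split; [now rewrite e|]. split; [|lia].
    intros p [<-|hp]; simpl; [lia|auto].
Qed.

Lemma st_alpha alpha stepf contf (Hs : StepOK alpha stepf) (ha : forall x, x <= alpha x) m n :
  prodl (fst (st stepf contf m)) n <= alpha n /\ pinv (prodl (fst (st stepf contf m))) n <= alpha n.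
Proof.
  revert n; induction m as [|m IH]; intros n; simpl. auto.
  destruct (st_entries alpha stepf contf Hs m) as [E _].
  destruct (Hs (fst (st stepf contf m)) m (snd (st stepf contf m))) as (h1 & h2 & h3).
  set (l := fst (st stepf contf m)) in *.
  set (c := fst (fst (stepf l m (snd (st stepf contf m))))) in *.
  set (d := snd (fst (stepf l m (snd (st stepf contf m))))) in *.
  assert (fx : forall x, c <= x -> prodl l x = x /\ pinv (prodl l) x = x).
  { intros x hx; apply prodl_fix. intros p hp; destruct (E p hp); lia. }
  unfold trf.
  destruct (Nat.eqb_spec n c) as [->|nc].
  - destruct (fx d ltac:(lia)) as [-> _]. destruct (fx c ltac:(lia)) as [_ ->].
    rewrite Nat.eqb_refl. lia.
  - destruct (Nat.eqb_spec n d) as [->|nd].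
    + destruct (fx c ltac:(lia)) as [-> _]. destruct (fx d ltac:(lia)) as [_ ->].
      rewrite Nat.eqb_refl. destruct (Nat.eqb_spec d c); try lia. pose proof (ha d); lia.
    + destruct (IH n) as [I1 I2]. split; auto.
      set (u := pinv (prodl l) n).
      assert (uc : u <> c).
      { intro e. destruct (fx c ltac:(lia)) as [f _]. apply nc.
        rewrite <- (pinvK (prodl l) n). fold u. rewrite e. auto. }
      assert (ud : u <> d).
      { intro e. destruct (fx d ltac:(lia)) as [f _]. apply nd.
        rewrite <- (pinvK (prodl l) n). fold u. rewrite e. auto. }
      destruct (Nat.eqb_spec u c); destruct (Nat.eqb_spec u d); try lia.
Qed.

Lemma st_stable alpha stepf contf (Hs : StepOK alpha stepf) j M n : j <= M ->
  n < snd (st stepf contf j) ->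
  prodl (fst (st stepf contf M)) n = prodl (fst (st stepf contf j)) n /\
  pinv (prodl (fst (st stepf contf M))) n = pinv (prodl (fst (st stepf contf j))) n.
Proof.
  intros hj hn.
  destruct (st_suffix alpha stepf contf Hs j M hj) as (new & e & hnew & _).
  destruct (st_entries alpha stepf contf Hs j) as [E _].
  rewrite e. split.
  - apply prodl_app. intros p hp; destruct (hnew p hp); lia.
  - apply prodl_app_inv. intros p hp; destruct (hnew p hp).
    set (l := fst (st stepf contf j)) in *.
    set (u := pinv (prodl l) n).
    assert (u < snd (st stepf contf j)).
    { apply Nat.nle_gt; intro hu.
      destruct (prodl_fix l u) as [f _]. intros q hq; destruct (E q hq); lia.
      assert (n = u) by (rewrite <- (pinvK (prodl l) n); fold u; auto). lia. }
    lia.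
Qed.

Lemma st_fval alpha stepf contf (Hs : StepOK alpha stepf) M n :
  n < snd (st stepf contf M) ->
  prodl (fst (st stepf contf (S n))) n = prodl (fst (st stepf contf M)) n /\
  pinv (prodl (fst (st stepf contf (S n)))) n = pinv (prodl (fst (st stepf contf M))) n.
Proof.
  intros h. destruct (Nat.le_ge_cases (S n) M) as [le|ge].
  - destruct (st_stable alpha stepf contf Hs (S n) M n le) as [a b].
    destruct (st_entries alpha stepf contf Hs (S n)); lia. auto.
  - destruct (st_stable alpha stepf contf Hs M (S n) n ge h) as [a b]. auto.
Qed.

Theorem mainTheorem11 (beta : nat -> nat -> nat) :
  exists alpha : nat -> nat,
    forall Phi : Sinf -> Sinf,
      is_hom Phi -> is_inj Phi -> is_cont Phi ->
      ~ (forall f : Sinf, inK alpha f -> exists m : nat, inK (beta m) (Phi f)).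
Proof.
  exists (alph beta). intros Phi H Hi Hc Hall.
  assert (ex_t : forall l m L, exists t : nat * nat * nat,
    L <= fst (fst t) /\ fst (fst t) < snd (fst t) /\ snd (fst t) <= alph beta (fst (fst t)) /\
    (beta m (snd t) < Phi (prodl l) (Phi (trS (fst (fst t)) (snd (fst t))) (snd t)) \/
     beta m (Phi (prodl l) (Phi (trS (fst (fst t)) (snd (fst t))) (snd t))) < snd t)).
  { intros l m L. destruct (stage Phi H Hi Hc beta (Phi (prodl l)) m L) as (c & d & w & h).
    exists (c, d, w); exact h. }
  set (stepf := fun l m L => proj1_sig (constructive_indefinite_description _ (ex_t l m L))).
  assert (stepP : forall l m L, let t := stepf l m L in
    L <= fst (fst t) /\ fst (fst t) < snd (fst t) /\ snd (fst t) <= alph beta (fst (fst t)) /\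
    (beta m (snd t) < Phi (prodl l) (Phi (trS (fst (fst t)) (snd (fst t))) (snd t)) \/
     beta m (Phi (prodl l) (Phi (trS (fst (fst t)) (snd (fst t))) (snd t))) < snd t)).
  { intros l m L. exact (proj2_sig (constructive_indefinite_description _ (ex_t l m L))). }
  set (contf := fun l w => proj1_sig (constructive_indefinite_description _ (Hc (prodl l) w))).
  assert (contP : forall l w (g : Sinf), (forall k, k < contf l w -> g k = prodl l k) ->
     Phi g w = Phi (prodl l) w).
  { intros l w. exact (proj2_sig (constructive_indefinite_description _ (Hc (prodl l) w))). }
  assert (Hs : StepOK (alph beta) stepf).
  { intros l m L. destruct (stepP l m L) as (a & b & c & _). auto. }
  set (S_ := st stepf contf).
  assert (fv := st_fval (alph beta) stepf contf Hs).
  assert (fe := st_entries (alph beta) stepf contf Hs).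
  set (F := fun n => prodl (fst (S_ (S n))) n).
  set (Fi := fun n => pinv (prodl (fst (S_ (S n)))) n).
  assert (FK : forall n, Fi (F n) = n).
  { intro n. set (v := F n). set (M := S n + S v).
    assert (LM : M <= snd (S_ M)) by (apply fe).
    destruct (fv M n ltac:(unfold S_ in *; lia)) as [a _].
    destruct (fv M v ltac:(unfold S_ in *; lia)) as [_ b].
    unfold Fi. fold S_ in a, b. rewrite b. unfold v, F. rewrite a. apply pfunK. }
  assert (FiK : forall n, F (Fi n) = n).
  { intro n. set (v := Fi n). set (M := S n + S v).
    assert (LM : M <= snd (S_ M)) by (apply fe).
    destruct (fv M n ltac:(unfold S_ in *; lia)) as [_ a].
    destruct (fv M v ltac:(unfold S_ in *; lia)) as [b _].
    unfold F. fold S_ in a, b. rewrite b. unfold v, Fi. rewrite a. apply pinvK. }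
  set (f := MkSinf F Fi FK FiK).
  assert (fK : inK (alph beta) f).
  { assert (ha : forall x, x <= alph beta x) by (intros; unfold alph; lia).
    split; intro n; simpl; unfold F, Fi;
      destruct (st_alpha (alph beta) stepf contf Hs ha (S n) n); auto. }
  destruct (Hall f fK) as [m [hm1 hm2]].
  destruct (stepP (fst (S_ m)) m (snd (S_ m))) as (_ & _ & _ & viol).
  set (t := stepf (fst (S_ m)) m (snd (S_ m))) in viol.
  set (l1 := (fst (fst t), snd (fst t)) :: fst (S_ m)).
  assert (E1 : Phi f (snd t) = Phi (prodl l1) (snd t)).
  { apply contP. intros k hk. simpl. unfold F.
    destruct (fv (S m) k) as [a _].
    - simpl. fold S_. fold t. fold l1. lia.
    - fold S_ in a. rewrite a. reflexivity. }
  assert (E2 : Phi (prodl l1) (snd t) = Phi (prodl (fst (S_ m))) (Phi (trS (fst (fst t)) (snd (fst t))) (snd t))).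
  { apply Phi_comp; auto. }
  rewrite <- E2, <- E1 in viol.
  destruct viol as [v|v].
  - specialize (hm1 (snd t)). lia.
  - specialize (hm2 (Phi f (snd t))). rewrite pfunK in hm2. lia.
Qed.
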